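(* Let $B = M \cup \{\omega_1,\ldots,\omega_p\}$ with $p\ge1$ and $\omega_i\in P_2\setminus M$, let $r(B)=\max\{d(\omega_1),\ldots,d(\omega_p)\}$ and $c(B)=\log_2(2r(B)+1)+1$. Then for every finite system $F$ of Boolean functions of variables $x_1,\ldots,x_n$, $$I_B(F)\ge \left\lceil \log_2(d(F)+1)\right\rceil - c(B).$$
   Context: $P_2$ denotes the set of all Boolean functions and $M\subset P_2$ the set of all monotone Boolean functions (including the constants). Tuples in $\{0,1\}^n$ are compared componentwise. An increasing chain is a sequence of pairwise distinct tuples $\tilde\alpha_1,\ldots,\tilde\alpha_r\in\{0,1\}^n$ with $\tilde\alpha_i\le\tilde\alpha_{i+1}$ for all $i$. For a Boolean function $f$, a pair $(\tilde\alpha,\tilde\beta)$ with $\tilde\alpha\le\tilde\beta$ and $f(\tilde\alpha)>f(\tilde\beta)$ is a jump of $f$; a pair is a jump of a system $F$ if it is a jump of some $f\in F$. For a chain $C=(\tilde\alpha_1,\ldots,\tilde\alpha_r)$, $d_C(F)$ is the number of $i$ with $(\tilde\alpha_i,\tilde\alpha_{i+1})$ a jump of $F$, and $d(F)=\max_C d_C(F)$ over all chains; $d(f)=d(\{f\})$. A circuit over $B$ is a Boolean circuit with inputs $x_1,\ldots,x_n$ whose gates compute functions of $B$; gates computing functions in $M$ have weight $0$ and gates computing some $\omega_i$ have weight $1$. $I_B(F)$ is the minimum total weight of a circuit over $B$ realizing all functions of $F$. *)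

(* Defs.v *)
From Stdlib Require Import Reals.
From mathcomp Require Import all_boot.
Set Implicit Arguments. Unset Strict Implicit. Unset Printing Implicit Defensive.

Definition btuple (n : nat) := {ffun 'I_n -> bool}.
Definition bfun (n : nat) := btuple n -> bool.

Definition leT n (a b : btuple n) : bool := [forall i, a i ==> b i].

Definition monotone n (f : bfun n) : Prop := forall a b, leT a b -> f a ==> f b.

Definition jump n (f : bfun n) (a b : btuple n) : bool := leT a b && (f a && ~~ f b).
Definition jumpF n m (F : 'I_m -> bfun n) (a b : btuple n) : bool :=
  [exists j, jump (F j) a b].

Definition chain n (s : seq (btuple n)) : bool := uniq s && sorted (@leT n) s.

Definition dC n m (F : 'I_m -> bfun n) (s : seq (btuple n)) : nat :=
  count (fun ab => jumpF F ab.1 ab.2) (zip s (behead s)).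

(* d(F) = max over all chains; a chain has at most #|btuple n| = 2^n elements,
   so the max over chains of all lengths k <= 2^n covers all chains. *)
Definition dsys n m (F : 'I_m -> bfun n) : nat :=
  \max_(k < (2 ^ n).+1) \max_(t : k.-tuple (btuple n) | chain t) dC F t.

Definition dfun n (f : bfun n) : nat := dsys (fun _ : 'I_1 => f).

Section Circuits.
Variables (p : nat) (ar : 'I_p -> nat).
Unset Implicit Arguments.
Variable om : forall i : 'I_p, bfun (ar i).
Set Implicit Arguments.

Inductive gkind :=
  | MonoG (k : nat) (g : bfun k)
  | OmG (i : 'I_p).

Definition garity (kd : gkind) : nat :=
  match kd with MonoG k _ => k | OmG i => ar i end.

Record gate := Gate { kind : gkind; wires : seq nat }.

(* nodes: 0..n-1 are the inputs x_1..x_n, n+j is the j-th gate *)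
Definition gapply (g : gate) (vals : seq bool) : bool :=
  let v := fun l : nat => nth false vals (nth 0 (wires g) l) in
  match kind g with
  | MonoG k h => h [ffun l : 'I_k => v l]
  | OmG i => om i [ffun l : 'I_(ar i) => v l]
  end.

Definition circuit := seq gate.

Definition gate0 : gate := Gate (MonoG (fun _ : btuple 0 => false)) [::].

Definition kind_ok (kd : gkind) : Prop :=
  match kd with MonoG k h => monotone h | OmG _ => True end.

Definition wf_gate (n j : nat) (g : gate) : Prop :=
  [/\ size (wires g) = garity (kind g),
      all (fun w => w < n + j) (wires g)
    & kind_ok (kind g)].

Definition wf_circuit (n : nat) (C : circuit) : Prop :=
  forall j, j < size C -> wf_gate n j (nth gate0 C j).

Definition eval (n : nat) (C : circuit) (x : btuple n) : seq bool :=
  foldl (fun vals g => rcons vals (gapply g vals)) [seq x i | i <- enum 'I_n] C.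

Definition realizes (n m : nat) (C : circuit) (F : 'I_m -> bfun n) : Prop :=
  forall j : 'I_m, exists2 v, v < n + size C &
    forall x, nth false (eval C x) v = F j x.

Definition weight (C : circuit) : nat :=
  count (fun g => if kind g is OmG _ then true else false) C.
End Circuits.

Definition rB (p : nat) (ar : 'I_p -> nat) (om : forall i, bfun (ar i)) : nat :=
  \max_(i < p) dfun (om i).

Definition log2 (x : R) : R := Rdiv (ln x) (ln 2).
(* ceiling: -floor(-x), Int_part being the floor *)
Definition Rceil (x : R) : Z := Z.opp (Int_part (Ropp x)).

Definition cB (p : nat) (ar : 'I_p -> nat) (om : forall i, bfun (ar i)) : R :=
  Rplus (log2 (Rplus (Rmult 2 (INR (rB om))) 1)) 1.

(* Main.v *)
Require Import Defs.
From Stdlib Require Import Reals Lra.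
From mathcomp Require Import all_boot.
From mathcomp Require Import zify.
Set Implicit Arguments. Unset Strict Implicit. Unset Printing Implicit Defensive.

Section Adj.
Variable T : Type.

Fixpoint adjc (w : T -> T -> nat) (s : seq T) : nat :=
  match s with
  | x :: s' => (if s' is y :: _ then w x y else 0) + adjc w s'
  | [::] => 0
  end.

Lemma adjc_mono (w w' : T -> T -> nat) s :
  (forall a b, w a b <= w' a b) -> adjc w s <= adjc w' s.
Proof.
move=> H; elim: s => //= x s IH; apply: leq_add => //.
by case: s IH => // y s _; apply: H.
Qed.

Lemma adjc_add (w w' : T -> T -> nat) s :
  adjc (fun a b => w a b + w' a b) s = adjc w s + adjc w' s.
Proof.
elim: s => //= x s ->; case: s => [|y s] /=; lia.
Qed.

Lemma adjc_sorted (R : rel T) (w w' : T -> T -> nat) s :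
  (forall a b, R a b -> w a b <= w' a b) -> sorted R s -> adjc w s <= adjc w' s.
Proof.
move=> H; elim: s => //= x s IH Hs.
case: s IH Hs => [|y s] IH /= Hs //.
move/andP: Hs => [Rxy Hs]; rewrite leq_add //; first exact: H.
exact: IH.
Qed.


Lemma adjc_filter (f : T -> bool) (w : T -> T -> nat) s :
  adjc (fun a b => if f a && f b then w a b else 0) s <= adjc w (filter f s).
Proof.
elim: s => //= x s IH.
case fx: (f x) => /=; last first.
  case: s IH => [|y s] IH /=; by [].

case: s IH => [|y s] IH /=; first by [].
move: IH => /=.
case fy: (f y) => /= IH.
  by rewrite leq_add2l.
rewrite add0n; apply: (leq_trans IH).
case E: (filter f s) => [|z t] /=; first by [].
by rewrite leq_addl.
Qed.

Lemma adjc_rises (f : T -> bool) s x :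
  adjc (fun a b => ~~ f a && f b) (x :: s) + f x <=
  adjc (fun a b => f a && ~~ f b) (x :: s) + 1.
Proof.
elim: s x => [|y s IH] x /=; first by case: (f x).
have := IH y; move=> /= H.
move: H; case: (f x); case: (f y) => /=; lia.
Qed.

Lemma adjc_changes (f : T -> bool) s :
  adjc (fun a b => f a != f b) s <= (adjc (fun a b => f a && ~~ f b) s).*2 + 1.
Proof.
case: s => [|x s] //.
have Hx := adjc_rises f s x.
apply: (@leq_trans (adjc (fun a b => (f a && ~~ f b) + (~~ f a && f b)) (x :: s))).
  by apply: adjc_mono => a b; case: (f a); case: (f b).
rewrite adjc_add -addnn; lia.
Qed.
End Adj.
Lemma adjc_map (T U : Type) (f : T -> U) (w : U -> U -> nat) s :
  adjc w (map f s) = adjc (fun a b => w (f a) (f b)) s.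
Proof. by elim: s => //= x s ->; case: s. Qed.


Section Dd.
Variable T : eqType.
Fixpoint dd (s : seq T) : seq T :=
  match s with
  | x :: s' => if s' is y :: _ then (if x == y then dd s' else x :: dd s') else [:: x]
  | [::] => [::]
  end.

Lemma dd_head y s : exists t, dd (y :: s) = y :: t.
Proof.
elim: s y => [|z s IH] y /=; first by exists [::].
case: eqP => [<-|_]; first exact: IH.
by eexists.
Qed.

Lemma dd_cons2 x y s : dd (x :: y :: s) = if x == y then dd (y :: s) else x :: dd (y :: s).
Proof. by []. Qed.

Lemma dd_sorted (R : rel T) s :
  sorted R s -> sorted (fun a b => R a b && (a != b)) (dd s).
Proof.
elim: s => // x s IH.
case: s IH => [|y s] IH // /andP [Rxy Hs].
rewrite dd_cons2.
case: eqP => [_|nxy]; first exact: IH.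
have [t Et] := dd_head y s.
have := IH Hs; rewrite Et /= => H.
by rewrite Rxy H andbT; apply/eqP.
Qed.

Lemma adjc_cons2 (w : T -> T -> nat) x y s : adjc w (x :: y :: s) = w x y + adjc w (y :: s).
Proof. by []. Qed.

Lemma adjc_dd (w : T -> T -> nat) s :
  (forall a, w a a = 0) -> adjc w (dd s) = adjc w s.
Proof.
move=> w0; elim: s => // x s IH.
case: s IH => [|y s] IH //.
rewrite dd_cons2.
have [t Et] := dd_head y s.
case: eqP => [Exy|_].
  by rewrite IH /= Exy w0.
by rewrite Et !adjc_cons2 -Et IH.
Qed.

End Dd.

Lemma adjc_count (T : Type) (P : T -> T -> bool) s :
  adjc (fun a b => P a b : nat) s = count (fun ab => P ab.1 ab.2) (zip s (behead s)).
Proof. by elim: s => //= x s ->; case: s. Qed.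

Lemma leT_refl n (a : btuple n) : leT a a.
Proof. by apply/forallP => i; apply/implyP. Qed.

Lemma leT_trans n : transitive (@leT n).
Proof.
move=> b a c /forallP H1 /forallP H2; apply/forallP => i.
by apply/implyP => /(implyP (H1 i)) /(implyP (H2 i)).
Qed.

Lemma leT_anti n (a b : btuple n) : leT a b -> leT b a -> a = b.
Proof.
move=> /forallP H1 /forallP H2; apply/ffunP => i.
by move: (H1 i) (H2 i); case: (a i); case: (b i).
Qed.

Lemma chain_le_dsys n m (F : 'I_m -> bfun n) (t : seq (btuple n)) :
  chain t -> dC F t <= dsys F.
Proof.
move=> ch.
have hs : size t < (2 ^ n).+1.
  rewrite ltnS.
  move: ch => /andP [u _].
  move/card_uniqP: u => <-.
  apply: (leq_trans (max_card _)).
  by rewrite card_ffun card_bool card_ord.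
have H1 := @leq_bigmax_cond _ (fun t0 : (size t).-tuple (btuple n) => chain t0) (fun t0 => dC F t0) (in_tuple t) ch.
have H2 := @leq_bigmax_cond _ (fun _ => true) (fun k : 'I_(2 ^ n).+1 => \max_(t0 : k.-tuple (btuple n) | chain t0) dC F t0) (Ordinal hs) isT.
exact: (leq_trans H1 H2).
Qed.

Lemma dsys_le n m (F : 'I_m -> bfun n) (M : nat) :
  (forall t : seq (btuple n), sorted (@leT n) t -> dC F t <= M) -> dsys F <= M.
Proof.
move=> H; apply/bigmax_leqP => k _; apply/bigmax_leqP => t /andP [_ st].
exact: H.
Qed.

Lemma drops_le_dfun k (g : bfun k) (s : seq (btuple k)) :
  sorted (@leT k) s -> adjc (fun a b => g a && ~~ g b : nat) s <= dfun g.
Proof.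
move=> st.
rewrite -adjc_dd; last by move=> a; case: (g a).
have sd := dd_sorted st.
have ch : chain (dd s).
  rewrite /chain.
  apply/andP; split; last first.
    by apply: sub_sorted sd => a b /andP [].
  apply: (sorted_uniq _ _ sd).
    move=> b a c /andP [l1 n1] /andP [l2 n2]; rewrite (leT_trans l1 l2) /=.
    apply/eqP => E; subst c; move/eqP: n1; apply; exact: leT_anti.
  by move=> a; rewrite eqxx andbF.
apply: (leq_trans _ (@chain_le_dsys _ _ (fun _ : 'I_1 => g) _ ch)).
rewrite /dC -adjc_count.
apply: (adjc_sorted (R := fun a b => leT a b && (a != b))) sd => a b /andP [lab _].
rewrite /jumpF; case: (boolP (g a && ~~ g b)) => // H.
have -> : [exists j : 'I_1, jump g a b] by apply/existsP; exists ord0; rewrite /jump lab.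
by [].
Qed.


Section Circ.
Variables (p : nat) (ar : 'I_p -> nat) (om : forall i : 'I_p, bfun (ar i)) (n : nat).

Definition isOm (g : gate p) : bool := if kind g is OmG _ then true else false.

Lemma weight_count (C : circuit p) : weight C = count isOm C.
Proof. by []. Qed.

Lemma eval_nil (x : btuple n) : eval om [::] x = [seq x i | i <- enum 'I_n].
Proof. by []. Qed.

Lemma nth_inputs (x : btuple n) v (hv : v < n) :
  nth false [seq x i | i <- enum 'I_n] v = x (Ordinal hv).
Proof.
rewrite (nth_map (Ordinal hv)); last by rewrite -?enumT ?size_enum_ord -?cardE ?card_ord.
rewrite -?enumT; f_equal; apply: val_inj; by rewrite /= nth_enum_ord.
Qed.

Lemma eval_rcons (C : circuit p) g (x : btuple n) :
  eval om (rcons C g) x = rcons (eval om C x) (gapply om g (eval om C x)).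
Proof. by rewrite /eval foldl_rcons. Qed.

Lemma size_eval (C : circuit p) (x : btuple n) : size (eval om C x) = n + size C.
Proof.
elim/last_ind: C => [|C g IH]; first by rewrite /eval /= size_map size_enum_ord addn0.
by rewrite eval_rcons !size_rcons IH addnS.
Qed.

Lemma eval_swap (C1 C2 : circuit p) g g' (x : btuple n) :
  gapply om g (eval om C1 x) = gapply om g' (eval om C1 x) ->
  eval om (C1 ++ g :: C2) x = eval om (C1 ++ g' :: C2) x.
Proof. by move=> E; rewrite /eval !foldl_cat /= -/(eval om C1 x) E. Qed.

Lemma eval_mono (C : circuit p) (a b : btuple n) : wf_circuit ar n C -> leT a b ->
  (forall j, j < size C -> isOm (nth (gate0 p) C j) ->
     nth false (eval om C a) (n + j) ==> nth false (eval om C b) (n + j)) ->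
  forall v, nth false (eval om C a) v ==> nth false (eval om C b) v.
Proof.
elim/last_ind: C => [|C g IH] wf lab H v.
  rewrite !eval_nil.
  case: (ltnP v n) => hv.
    rewrite !(nth_inputs _ hv).
    by move/forallP: lab => /(_ (Ordinal hv)).
  by rewrite nth_default // size_map size_enum_ord.
have IH' : forall v, nth false (eval om C a) v ==> nth false (eval om C b) v.
  apply: IH => // [j hj|j hj hom].
    have := wf j; rewrite size_rcons nth_rcons hj ltnS ltnW //; exact.
  have := H j; rewrite size_rcons nth_rcons hj ltnS ltnW // => /(_ isT hom).
  by rewrite !eval_rcons !nth_rcons !size_eval ltn_add2l hj.
rewrite !eval_rcons !nth_rcons !size_eval.
case: ifP => hv; first exact: IH'.
case: eqP => hv2; last by [].
case Eg: g => [kd ws]; case: kd Eg => [k h|i] Eg.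
  have := wf (size C); rewrite size_rcons ltnSn => /(_ isT).
  rewrite nth_rcons ltnn eqxx Eg => -[_ _ hk].
  rewrite /gapply /=; apply: hk; apply/forallP => l; rewrite !ffunE; exact: IH'.
have := H (size C); rewrite size_rcons ltnSn nth_rcons ltnn eqxx Eg => /(_ isT isT).
by rewrite !eval_rcons !nth_rcons !size_eval ltnn eqxx.
Qed.
End Circ.


Section Key.
Variables (p : nat) (ar : 'I_p -> nat) (om : forall i : 'I_p, bfun (ar i)) (n : nat).

Definition bad (C : circuit p) (a b : btuple n) : nat :=
  ~~ all (fun v => nth false (eval om C a) v ==> nth false (eval om C b) v) (iota 0 (n + size C)).

Lemma adjc0 (T : Type) (s : seq T) : adjc (fun _ _ => 0) s = 0.
Proof. by elim: s => //= x s ->; case: s. Qed.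

Lemma wf_swap (C1 C2 : circuit p) g g' :
  wf_circuit ar n (C1 ++ g :: C2) -> wf_gate ar n (size C1) g' ->
  wf_circuit ar n (C1 ++ g' :: C2).
Proof.
move=> wf wg j; rewrite !size_cat /= => hj.
have := wf j; rewrite !size_cat /= => /(_ hj).
rewrite !nth_cat; case: ifP => // hj1.
case E: (j - size C1) => [|t] /=; last by [].
move=> _; have -> : j = size C1 by lia.
exact: wg.
Qed.

Lemma no_om_mono (C : circuit p) (a b : btuple n) :
  weight C = 0 -> wf_circuit ar n C -> leT a b ->
  forall v, nth false (eval om C a) v ==> nth false (eval om C b) v.
Proof.
move=> w0 wf lab; apply: eval_mono => // j hj hom.
have : has (@isOm p) C by apply/(has_nthP (gate0 p)); exists j.
by rewrite has_count -weight_count w0.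
Qed.

Lemma key k : forall C : circuit p, weight C = k -> wf_circuit ar n C ->
  forall s, sorted (@leT n) s -> adjc (bad C) s <= (2 * rB om + 1) * (2 ^ k - 1).
Proof.
elim: k => [|k IH] C wC wf s st.
  rewrite muln0.
  apply: (@leq_trans (adjc (fun _ _ => 0) s)); last by rewrite adjc0.
  apply: (adjc_sorted _ st) => a b lab; rewrite /bad.
  suff -> : all (fun v => nth false (eval om C a) v ==> nth false (eval om C b) v) (iota 0 (n + size C)) by [].
  by apply/allP => v _; apply: no_om_mono.
(* decompose at the first omega gate *)
have hasC : has (@isOm p) C by rewrite has_count -weight_count wC.
set j0 := find (@isOm p) C.
have hj0 : j0 < size C by rewrite -has_find.
have isg := nth_find (gate0 p) hasC.
set g := nth (gate0 p) C j0 in isg.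
set C1 := take j0 C; set C2 := drop j0.+1 C.
have EC : C = C1 ++ g :: C2 by rewrite /C1 /C2 /g -drop_nth // cat_take_drop.
have w1 : weight C1 = 0.
  apply/eqP; rewrite eqn0Ngt -has_count /C1 has_take_leq ?ltnn //; exact: ltnW.
have sC1 : size C1 = j0 by rewrite /C1 size_take hj0.
case Eg : g isg => [kd ws]; case: kd Eg => [kk h|i] Eg //= _.
have wC2 : weight C2 = k.
  move: wC; rewrite EC Eg !weight_count count_cat /= -!weight_count w1; lia.
have wf1 : wf_circuit ar n C1.
  move=> j hj; have := wf j; rewrite EC size_cat /= => /(_ ltac:(lia)).
  by rewrite nth_cat hj.
have wg : wf_gate ar n (size C1) (Gate (OmG i) ws).
  by rewrite sC1; have := wf j0 hj0; rewrite -/g Eg.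
case: wg => sws aws _.
pose g' (c : bool) := Gate (MonoG p (fun _ : btuple (ar i) => c)) ws.
pose C' c := C1 ++ g' c :: C2.
have wC' : forall c, weight (C' c) = k.
  by move=> c; rewrite /C' weight_count count_cat /= -!weight_count w1 wC2.
have wfC' : forall c, wf_circuit ar n (C' c).
  move=> c; apply: (@wf_swap _ _ (Gate (OmG i) ws)); first by rewrite -Eg -EC.
  split; [exact: sws | exact: aws | by move=> x0 y0 _ /=; apply/implyP].
pose y (x : btuple n) : btuple (ar i) := [ffun l : 'I_(ar i) => nth false (eval om C1 x) (nth 0 ws l)].
pose f (x : btuple n) := @om i (y x).
have evC : forall x, eval om C x = eval om (C' (f x)) x.
  move=> x; rewrite EC Eg; apply: eval_swap.
  by rewrite /gapply /=.
have sizeC' : forall c, size (C' c) = size C by move=> c; rewrite EC Eg !size_cat.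
have badC : forall c a b, f a = c -> f b = c -> bad C a b = bad (C' c) a b.
  by move=> c a b fa fb; rewrite /bad sizeC' !evC fa fb.
apply: (@leq_trans (adjc (fun a b => (f a != f b) +
          ((if (f a == true) && (f b == true) then bad (C' true) a b else 0) +
           (if (f a == false) && (f b == false) then bad (C' false) a b else 0))) s)).
  apply: adjc_mono => a b.
  case Ea: (f a); case Eb: (f b) => /=.
  - by rewrite (badC true a b Ea Eb) add0n addn0.
  - by rewrite /bad; case: (~~ all _ _).
  - by rewrite /bad; case: (~~ all _ _).
  - by rewrite (badC false a b Ea Eb).
rewrite !adjc_add.
have H1 : adjc (fun a b => f a != f b) s <= 2 * rB om + 1.
  apply: (leq_trans (adjc_changes f s)).
  rewrite -mul2n leq_add2r leq_mul2l /=.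
  have -> : adjc (fun a b => f a && ~~ f b : nat) s =
            adjc (fun a b => @om i a && ~~ @om i b : nat) (map y s) by rewrite adjc_map.
  apply: (leq_trans (drops_le_dfun _ _)).
    rewrite sorted_map; apply: sub_sorted st => a b lab.
    apply/forallP => l; rewrite !ffunE; exact: no_om_mono.
  exact: (@leq_bigmax_cond _ (fun _ => true) (fun i0 => dfun (@om i0)) i).
have H2 : forall c, adjc (fun a b => if (f a == c) && (f b == c) then bad (C' c) a b else 0) s
                    <= (2 * rB om + 1) * (2 ^ k - 1).
  move=> c; apply: (leq_trans (adjc_filter (fun x => f x == c) _ s)).
  apply: IH => //; exact: sorted_filter (@leT_trans n) _ _ st.
have := H2 true; have := H2 false.
rewrite expnS; have := expn_gt0 2 k; nia.
Qed.
End Key.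


Lemma INR_muln a b : INR (a * b) = Rmult (INR a) (INR b).
Proof. by rewrite -mult_INR. Qed.

Lemma INR_addn a b : INR (a + b) = Rplus (INR a) (INR b).
Proof. by rewrite -plus_INR. Qed.

Lemma INR_expn2 w : INR (2 ^ w) = pow 2 w.
Proof.
elim: w => // w IH; rewrite expnS INR_muln IH /=; reflexivity.
Qed.

Section RealPart.
Local Open Scope R_scope.
Lemma real_part (w d r : nat) (H : INR d + 1 <= (2 * INR r + 1) * 2 ^ w) :
  Rge (INR w) (Rminus (IZR (Rceil (log2 (Rplus (INR d) 1)))) (Rplus (log2 (Rplus (Rmult 2 (INR r)) 1)) 1)).
Proof.
have hL2 : 0 < ln 2 by rewrite -ln_1; apply: ln_increasing; lra.
have hr := pos_INR r.
have hd := pos_INR d.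
have hK : 0 < 2 * INR r + 1 by lra.
have hx : 0 < INR d + 1 by lra.
have hln : ln (INR d + 1) <= ln (2 * INR r + 1) + INR w * ln 2.
  rewrite -ln_pow; last lra.
  rewrite -ln_mult; [|lra|apply: pow_lt; lra].
  case: (Rle_lt_or_eq_dec _ _ H) => h.
    by left; apply: ln_increasing.
  by right; rewrite h.
have hlog : log2 (INR d + 1) <= log2 (2 * INR r + 1) + INR w.
  have -> : log2 (2 * INR r + 1) + INR w = (ln (2 * INR r + 1) + INR w * ln 2) / ln 2.
    rewrite /log2; field; lra.
  rewrite /log2 /Rdiv; apply: Rmult_le_compat_r => //.
  by left; apply: Rinv_0_lt_compat.
have hceil : forall y, IZR (Rceil y) < y + 1.
  move=> y; rewrite /Rceil opp_IZR; case: (base_Int_part (- y)) => h1 h2; lra.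
have := hceil (log2 (INR d + 1)).
move=> hc; apply: Rle_ge; lra.
Qed.
End RealPart.

Unset Implicit Arguments.
Theorem lemma2 (p : nat) (hp : 0 < p) (ar : 'I_p -> nat)
    (om : forall i : 'I_p, bfun (ar i))
    (hom : forall i : 'I_p, ~ monotone (om i))
    (n m : nat) (F : 'I_m -> bfun n) (C : circuit p)
    (hC : wf_circuit ar n C) (hCF : realizes om C F) :
  Rge (INR (weight C)) (Rminus (IZR (Rceil (log2 (Rplus (INR (dsys F)) 1)))) (cB om)).
Proof.
have hd : dsys F <= (2 * rB om + 1) * (2 ^ weight C - 1).
  apply: dsys_le => t st.
  rewrite /dC -adjc_count.
  apply: leq_trans (@key p ar om n (weight C) C erefl hC t st).
  apply: adjc_mono => a b.
  case: (boolP (jumpF F a b)) => //= /existsP [j /andP [_ /andP [Fa nFb]]].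
  have [v hv Hv] := hCF j.
  rewrite /bad; case Hall: (all _ _) => //=.
  have := allP Hall v; rewrite mem_iota /= => /(_ hv).
  by rewrite !Hv Fa (negbTE nFb).
have hn : dsys F + 1 <= (2 * rB om + 1) * 2 ^ weight C.
  have := expn_gt0 2 (weight C); nia.
apply: real_part.
have := le_INR _ _ (leP hn).
rewrite INR_addn INR_muln INR_expn2 INR_addn INR_muln /=.
by [].
Qed.
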